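(* Let $r,k\geq 2$ be integers. Then $D_{r,k}$ is a numerical semigroup.
   Context: For positive integers $v,b,r,k$, a $(v,b,r,k)$-configuration is a connected bipartite graph with $v$ vertices on one side, each of degree $r$, and $b$ vertices on the other side, each of degree $k$, containing no cycle of length $4$. By convention the empty graph (with $v=b=0$) is also regarded as a configuration. A tuple $(v,b,r,k)$ is configurable if a $(v,b,r,k)$-configuration exists. Let $\mathbb{N}_0=\{0,1,2,\dots\}$ and define $$D_{r,k}=\left\{d\in\mathbb{N}_0:\left(d\tfrac{k}{\gcd(r,k)},\,d\tfrac{r}{\gcd(r,k)},\,r,\,k\right)\text{ is configurable}\right\}.$$ A numerical semigroup is a subset of $\mathbb{N}_0$ containing $0$, closed under addition, whose complement in $\mathbb{N}_0$ is finite. *)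

(* Defs.v *)
From mathcomp Require Import all_boot.
Set Implicit Arguments. Unset Strict Implicit. Unset Printing Implicit Defensive.

(* A bipartite (simple) graph with point side 'I_v and line side 'I_b is given
   by its incidence relation inc p l ("point p adjacent to line l"). *)

Definition bip_adj (v b : nat) (inc : 'I_v -> 'I_b -> bool) :
    rel ('I_v + 'I_b)%type :=
  fun x y => match x, y with
             | inl p, inr l => inc p l
             | inr l, inl p => inc p l
             | _, _ => false
             end.

Definition is_configuration (v b r k : nat) (inc : 'I_v -> 'I_b -> bool) : Prop :=
  (* connected (vacuous for the empty graph v = b = 0) *)
  (forall x y : ('I_v + 'I_b)%type, connect (bip_adj inc) x y) /\
  (forall p : 'I_v, #|[set l | inc p l]| = r) /\
  (forall l : 'I_b, #|[set p | inc p l]| = k) /\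
  (forall (p1 p2 : 'I_v) (l1 l2 : 'I_b),
      p1 != p2 -> l1 != l2 ->
      ~ [/\ inc p1 l1, inc p1 l2, inc p2 l1 & inc p2 l2]).

Definition configurable (v b r k : nat) : Prop :=
  exists inc : 'I_v -> 'I_b -> bool, is_configuration r k inc.

Definition D (r k : nat) (d : nat) : Prop :=
  configurable (d * (k %/ gcdn r k)) (d * (r %/ gcdn r k)) r k.

Definition numerical_semigroup (S : nat -> Prop) : Prop :=
  S 0 /\ (forall m n, S m -> S n -> S (m + n)) /\
  (exists N, forall n, N <= n -> S n).

(* Main.v *)
Require Import Defs.
From mathcomp Require Import all_boot.
From mathcomp Require Import zify.
Set Implicit Arguments. Unset Strict Implicit. Unset Printing Implicit Defensive.


Definition adj (P L : finType) (inc : P -> L -> bool) : rel (P + L)%type :=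
  fun x y => match x, y with
             | inl p, inr l => inc p l
             | inr l, inl p => inc p l
             | _, _ => false
             end.

Definition gconf (P L : finType) (r k : nat) (inc : P -> L -> bool) : Prop :=
  (forall x y : (P + L)%type, connect (adj inc) x y) /\
  (forall p : P, #|[set l | inc p l]| = r) /\
  (forall l : L, #|[set p | inc p l]| = k) /\
  (forall (p1 p2 : P) (l1 l2 : L),
      p1 != p2 -> l1 != l2 ->
      ~ [/\ inc p1 l1, inc p1 l2, inc p2 l1 & inc p2 l2]).

Lemma adj_sym (P L : finType) (inc : P -> L -> bool) : symmetric (adj inc).
Proof. by case=> [p|l] [q|m]. Qed.

Lemma connect_hom (T T' : finType) (e : rel T) (e' : rel T') (f : T -> T') :
  (forall x y, e x y -> e' (f x) (f y)) ->
  forall x y, connect e x y -> connect e' (f x) (f y).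
Proof.
move=> hf x _ /connectP[p pp ->]; elim: p x pp => [|z p IH] x /=.
  by move=> _; apply: connect0.
case/andP=> exz pz; apply: connect_trans (IH _ pz).
by apply: connect1; apply: hf.
Qed.

Lemma transfer (P L : finType) r k (inc : P -> L -> bool) :
  gconf r k inc -> configurable #|P| #|L| r k.
Proof.
case=> [hc [hp [hl h4]]].
exists (fun p l => inc (enum_val p) (enum_val l)); split; last split; last split.
- move=> x y.
  pose f := fun z : (P + L)%type => match z with
              | inl p => inl (enum_rank p) | inr l => inr (enum_rank l) end.
  pose h := fun z : ('I_#|P| + 'I_#|L|)%type => match z with
              | inl p => inl (enum_val p) | inr l => inr (enum_val l) end.
  have fh : forall z, f (h z) = z by case=> z /=; rewrite enum_valK.
  rewrite -(fh x) -(fh y); apply: (connect_hom (e := adj inc)); last exact: hc.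
  by case=> [p|l] [q|m] //=; rewrite !enum_rankK.
- move=> p; rewrite -(hp (enum_val p)).
  have -> : [set l | inc (enum_val p) l] =
     enum_val @: [set l : 'I_#|L| | inc (enum_val p) (enum_val l)].
    apply/setP=> l; rewrite inE; apply/idP/imsetP.
      by move=> H; exists (enum_rank l); rewrite ?inE enum_rankK.
    by case=> l' /[!inE] ? ->.
  by rewrite card_imset //; apply: enum_val_inj.
- move=> l; rewrite -(hl (enum_val l)).
  have -> : [set p | inc p (enum_val l)] =
     enum_val @: [set p : 'I_#|P| | inc (enum_val p) (enum_val l)].
    apply/setP=> p; rewrite inE; apply/idP/imsetP.
      by move=> H; exists (enum_rank p); rewrite ?inE enum_rankK.
    by case=> p' /[!inE] ? ->.
  by rewrite card_imset //; apply: enum_val_inj.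
- move=> p1 p2 l1 l2 np nl; apply: h4.
  + by rewrite (inj_eq (@enum_val_inj _ _)).
  + by rewrite (inj_eq (@enum_val_inj _ _)).
Qed.


Definition rmedge (V : finType) (e : rel V) (a b : V) : rel V :=
  fun x y => e x y && ~~ (((x == a) && (y == b)) || ((x == b) && (y == a))).

Lemma rmedge_sym (V : finType) (e : rel V) a b : symmetric e -> symmetric (rmedge e a b).
Proof.
move=> es x y; rewrite /rmedge es; congr (_ && _).
by rewrite orbC (andbC (y == a)) (andbC (y == b)).
Qed.

Lemma connect_ind_l (V : finType) (e : rel V) x (Q : V -> Prop) :
  Q x -> (forall y z, Q y -> e y z -> Q z) -> forall y, connect e x y -> Q y.
Proof.
move=> Qx st y /connectP[p pp ->]; elim: p x Qx pp => //= z p IH x Qx.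
by case/andP=> exz pz; apply: IH pz; apply: st exz.
Qed.

Lemma split2 (V : finType) (e : rel V) a b x z : connect e x z ->
  connect (rmedge e a b) x z \/ connect (rmedge e a b) a z \/ connect (rmedge e a b) b z.
Proof.
move: z; apply: connect_ind_l; first by left; apply: connect0.
move=> y z Qy eyz.
case: (boolP (((y == a) && (z == b)) || ((y == b) && (z == a)))).
  case/orP=> /andP[_ /eqP ->]; right; [right|left]; exact: connect0.
move=> nr; have r : rmedge e a b y z by rewrite /rmedge eyz nr.
case: Qy => [H|[H|H]]; [left|right;left|right;right];
  by apply: connect_trans H (connect1 r).
Qed.

Section NB.
Variables (V : finType) (e : rel V).
Hypothesis esym : symmetric e.
Hypothesis eirr : irreflexive e.
Hypothesis two : forall v, exists a b, [/\ e v a, e v b & a != b].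

Definition nxt (u v : V) : V := odflt v [pick w | e v w && (w != u)].

Lemma nxtP u v : e v (nxt u v) && (nxt u v != u).
Proof.
rewrite /nxt; case: pickP => [w //|H] /=.
case: (two v) => a [b [ea eb nab]].
case: (eqVneq a u) => [au|nau]; last by move: (H a); rewrite ea nau.
by move: (H b); rewrite eb -au eq_sym nab.
Qed.

Variable x0 : V.

Fixpoint walk n : V * V :=
  if n is m.+1 then let: (u, v) := walk m in (v, nxt u v) else (x0, x0).
Definition W n := (walk n).2.

Lemma walk1 n : (walk n.+1).1 = W n.
Proof. by rewrite /W /=; case: (walk n). Qed.

Lemma WS n : W n.+1 = nxt (walk n).1 (W n).
Proof. by rewrite /W /=; case: (walk n). Qed.

Lemma We n : e (W n) (W n.+1).
Proof. by rewrite WS; case/andP: (nxtP (walk n).1 (W n)). Qed.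

Lemma Wnb n : W n.+2 != W n.
Proof. by rewrite WS walk1; case/andP: (nxtP (W n) (W n.+1)). Qed.

Lemma Wpig : exists i j, i < j /\ W i = W j.
Proof.
pose f : 'I_#|V|.+1 -> V := fun t => W t.
have : ~~ injectiveb f.
  by apply/negP => /injectiveP/leq_card; rewrite card_ord ltnn.
case/injectivePn=> x [y nxy fxy].
case: (ltngtP x y) => [lt|lt|eq]; first by exists x, y.
  by exists y, x.
by case/eqP: nxy; apply: val_inj.
Qed.

Lemma nonbridge : exists a b, e a b /\ connect (rmedge e a b) a b.
Proof.
pose Q j := [exists i : 'I_j, W i == W j].
have exQ : exists j, Q j.
  case: Wpig => i [j [lij eij]]; exists j; apply/existsP.
  by exists (Ordinal lij); rewrite /= eij.
case: (ex_minnP exQ) => j /existsP[[i hi] /= /eqP eij] jmin.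
have inj : forall i1 i2, i1 < i2 -> i2 < j -> W i1 != W i2.
  move=> i1 i2 l12 l2j; apply/negP => /eqP E.
  have : j <= i2 by apply: jmin; apply/existsP; exists (Ordinal l12); rewrite /= E.
  by rewrite leqNgt l2j.
have j3 : i.+2 < j.
  case: (ltngtP i.+2 j) => // H.
    have : j = i.+1 by lia.
    by move=> je; move: (We i); rewrite eij je -je eirr.
  by move: (Wnb i); rewrite H -eij eqxx.
exists (W j.-1), (W j); split.
  have jp : 0 < j by lia.
  by move: (We j.-1); rewrite prednK.
have key : forall d, d <= j.-1 - i -> connect (rmedge e (W j.-1) (W j)) (W j.-1) (W (j.-1 - d)).
  elim=> [|d IH] hd; first by rewrite subn0; apply: connect0.
  apply: connect_trans (IH (ltnW hd)) _; apply: connect1.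
  have -> : j.-1 - d = (j.-1 - d.+1).+1 by lia.
  set t := j.-1 - d.+1.
  rewrite /rmedge esym We /=; apply/negP; case/orP=> /andP[/eqP E1 /eqP E2]; last first.
    by move: (inj t j.-1 ltac:(lia) ltac:(lia)); rewrite E2 eqxx.
  move: E1 E2; rewrite -eij => E1 E2.
  case: (ltngtP i t) => H.
  - by move: (inj i t H ltac:(lia)); rewrite E2 eqxx.
  - lia.
  - move: (inj t.+1 j.-1 ltac:(lia) ltac:(lia)); rewrite -E1.
    by rewrite eqxx.
move: (key _ (leqnn _)).
have -> : j.-1 - (j.-1 - i) = i by lia.
by rewrite eij.
Qed.
End NB.


Lemma inlE (A B : eqType) (a a' : A) : (inl a == inl a' :> A + B) = (a == a').
Proof. by []. Qed.
Lemma inrE (A B : eqType) (a a' : B) : (inr a == inr a' :> A + B) = (a == a').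
Proof. by []. Qed.

Lemma card_swL (B C : finType) (F : pred B) (q : bool) (b1 : B) (c2 : C)
  (h : (B + C)%type -> bool) :
  (forall l, h (inl l) = F l && ~~ (q && (l == b1))) ->
  (forall c, h (inr c) = q && (c == c2)) -> (q -> F b1) ->
  #|[set y | h y]| = #|[set l | F l]|.
Proof.
move=> hl hr qF.
pose phi l : (B + C)%type := if q && (l == b1) then inr c2 else inl l.
have inj : injective phi.
  move=> x y; rewrite /phi.
  case: ifP => [/andP[_ /eqP ->]|_]; case: ifP => [/andP[_ /eqP ->]|_] //.
  by case.
have -> : [set y | h y] = phi @: [set l | F l]; last by rewrite card_imset.
apply/setP=> y; rewrite inE; apply/idP/imsetP.
  case: y => [l|c]; rewrite ?hl ?hr.
    by case/andP=> Fl nq; exists l; rewrite ?inE // /phi (negbTE nq).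
  by case/andP=> qq /eqP ->; exists b1; rewrite ?inE ?qF // /phi qq eqxx.
case=> l /[!inE] Fl ->; rewrite /phi.
case: ifP => [/andP[qq _]|nq]; rewrite ?hl ?hr; first by rewrite qq eqxx.
by rewrite Fl nq.
Qed.

Lemma card_swR (B C : finType) (F : pred B) (q : bool) (b1 : B) (c2 : C)
  (h : (C + B)%type -> bool) :
  (forall l, h (inr l) = F l && ~~ (q && (l == b1))) ->
  (forall c, h (inl c) = q && (c == c2)) -> (q -> F b1) ->
  #|[set y | h y]| = #|[set l | F l]|.
Proof.
move=> hl hr qF.
pose phi l : (C + B)%type := if q && (l == b1) then inl c2 else inr l.
have inj : injective phi.
  move=> x y; rewrite /phi.
  case: ifP => [/andP[_ /eqP ->]|_]; case: ifP => [/andP[_ /eqP ->]|_] //.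
  by case.
have -> : [set y | h y] = phi @: [set l | F l]; last by rewrite card_imset.
apply/setP=> y; rewrite inE; apply/idP/imsetP.
  case: y => [c|l]; rewrite ?hl ?hr.
    by case/andP=> qq /eqP ->; exists b1; rewrite ?inE ?qF // /phi qq eqxx.
  by case/andP=> Fl nq; exists l; rewrite ?inE // /phi (negbTE nq).
case=> l /[!inE] Fl ->; rewrite /phi.
case: ifP => [/andP[qq _]|nq]; rewrite ?hl ?hr; first by rewrite qq eqxx.
by rewrite Fl nq.
Qed.

Lemma remC (V : finType) (e : rel V) a b : rmedge e a b =2 rmedge e b a.
Proof. by move=> x y; rewrite /rmedge orbC. Qed.

Definition minc (P1 L1 P2 L2 : finType) (inc1 : P1 -> L1 -> bool)
  (inc2 : P2 -> L2 -> bool) p1 l1 p2 l2 (x : (P1 + P2)%type) (y : (L1 + L2)%type) : bool :=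
  match x, y with
  | inl p, inl l => inc1 p l && ~~ ((p == p1) && (l == l1))
  | inr p, inr l => inc2 p l && ~~ ((p == p2) && (l == l2))
  | inl p, inr l => (p == p1) && (l == l2)
  | inr p, inl l => (p == p2) && (l == l1)
  end.

Lemma two_of (P L : finType) r k (inc : P -> L -> bool) : 2 <= r -> 2 <= k ->
  gconf r k inc -> forall v, exists a b, [/\ adj inc v a, adj inc v b & a != b].
Proof.
move=> hr hk [_ [d [dl _]]]; case=> [p|l].
  have : 1 < #|[set l | inc p l]| by rewrite d.
  by case/card_gt1P => a [b [/[!inE] ha hb nab]]; exists (inr a), (inr b).
have : 1 < #|[set p | inc p l]| by rewrite dl.
by case/card_gt1P => a [b [/[!inE] ha hb nab]]; exists (inl a), (inl b).
Qed.

Lemma mergeG (P1 L1 P2 L2 : finType) r k (inc1 : P1 -> L1 -> bool)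
  (inc2 : P2 -> L2 -> bool) (p0 : P1) (q0 : P2) :
  2 <= r -> 2 <= k -> gconf r k inc1 -> gconf r k inc2 ->
  exists inc : (P1 + P2)%type -> (L1 + L2)%type -> bool, gconf r k inc.
Proof.
move=> hr hk G1 G2.
have two1 := two_of hr hk G1.
case: G1 => [c1 [d1 [e1 f1]]]; case: G2 => [c2 [d2 [e2 f2]]].
have eirr1 : irreflexive (adj inc1) by case.
case: (nonbridge (@adj_sym _ _ inc1) eirr1 two1 (inl p0)) => a [b [eab cab]].
have [p1 [l1 [i11 c11]]] : exists p1 l1, inc1 p1 l1 /\
    connect (rmedge (adj inc1) (inl p1) (inr l1)) (inl p1) (inr l1).
  case: a b eab cab => [p|l] [q|m] //= eab cab; first by exists p, m.
  exists q, l; split => //.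
  rewrite (sym_connect_sym (rmedge_sym _ _ (@adj_sym _ _ inc1))).
  by rewrite -(eq_connect (@remC _ _ _ _)).
have [l2 i22] : exists l2, inc2 q0 l2.
  have : 0 < #|[set l | inc2 q0 l]| by rewrite d2; lia.
  by case/card_gt0P => l /[!inE] ?; exists l.
exists (minc inc1 inc2 p1 l1 q0 l2).
set inc := minc inc1 inc2 p1 l1 q0 l2.
split; last split; last split.
- pose e := adj inc.
  pose root : ((P1 + P2) + (L1 + L2))%type := inl (inl p1).
  pose emb1 (z : (P1 + L1)%type) : ((P1 + P2) + (L1 + L2))%type :=
    match z with inl p => inl (inl p) | inr l => inr (inl l) end.
  pose emb2 (z : (P2 + L2)%type) : ((P1 + P2) + (L1 + L2))%type :=
    match z with inl p => inl (inr p) | inr l => inr (inr l) end.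
  have hom1 : forall x y, rmedge (adj inc1) (inl p1) (inr l1) x y -> e (emb1 x) (emb1 y).
    case=> [p|l] [q|m] //; rewrite /rmedge /= ?inlE ?inrE ?orbF //.
    by rewrite (andbC (l == l1)).
  have hom2 : forall x y, rmedge (adj inc2) (inl q0) (inr l2) x y -> e (emb2 x) (emb2 y).
    case=> [p|l] [q|m] //; rewrite /rmedge /= ?inlE ?inrE ?orbF //.
    by rewrite (andbC (l == l2)).
  have A1 : forall w, connect (rmedge (adj inc1) (inl p1) (inr l1)) (inl p1) w.
    move=> w; case: (split2 (inl p1) (inr l1) (c1 (inl p1) w)) => [H|[H|H]] //.
    exact: connect_trans c11 H.
  have A2 : forall w, connect (rmedge (adj inc2) (inl q0) (inr l2)) (inl q0) w \/
                      connect (rmedge (adj inc2) (inl q0) (inr l2)) (inr l2) w.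
    move=> w; case: (split2 (inl q0) (inr l2) (c2 (inl q0) w)) => [H|[H|H]]; by auto.
  have R1 : forall w, connect e root (emb1 w).
    by move=> w; apply: (connect_hom hom1 (A1 w)).
  have Rq : connect e root (emb2 (inl q0)).
    apply: connect_trans (R1 (inr l1)) _; apply: connect1.
    by rewrite /e /= /inc /= !eqxx.
  have Rl : connect e root (emb2 (inr l2)).
    by apply: connect1; rewrite /e /= /inc /= !eqxx.
  have R2 : forall w, connect e root (emb2 w).
    move=> w; case: (A2 w) => H.
      exact: connect_trans Rq (connect_hom hom2 H).
    exact: connect_trans Rl (connect_hom hom2 H).
  have Rall : forall z, connect e root z.
    case=> [[p|p]|[l|l]].
    + exact: (R1 (inl p)).
    + exact: (R2 (inl p)).
    + exact: (R1 (inr l)).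
    + exact: (R2 (inr l)).
  move=> x y; apply: connect_trans (Rall y).
  by rewrite (sym_connect_sym (@adj_sym _ _ inc)).
- case=> p.
  + rewrite (@card_swL _ _ (inc1 p) (p == p1) l1 l2 (inc (inl p))) //.
    by move/eqP->.
  + rewrite (@card_swR _ _ (inc2 p) (p == q0) l2 l1 (inc (inr p))) //.
    by move/eqP->.
- case=> l.
  + rewrite (@card_swL _ _ (inc1^~ l) (l == l1) p1 q0 (inc^~ (inl l))) //.
    * by move=> p; rewrite /inc /= (andbC (l == l1)).
    * by move=> p; rewrite /inc /= (andbC (l == l1)).
    * by move/eqP->.
  + rewrite (@card_swR _ _ (inc2^~ l) (l == l2) q0 p1 (inc^~ (inr l))) //.
    * by move=> p; rewrite /inc /= (andbC (l == l2)).
    * by move=> p; rewrite /inc /= (andbC (l == l2)).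
    * by move/eqP->.
- move=> x y u w nxy nuw [h1 h2 h3 h4].
  move: x y u w nxy nuw h1 h2 h3 h4 => [p|p] [q|q] [l|l] [m|m] /=;
    rewrite /inc /= ?inlE ?inrE => nxy nuw h1 h2 h3 h4;
    repeat match goal with
    | H : is_true ((_ == _) && (_ == _)) |- _ =>
        case/andP: H => /eqP ? /eqP ?; subst
    end;
    try (match goal with H : _ |- _ => solve [rewrite !eqxx ?andbF in H; done] end).
  + apply: (f1 p q l m nxy nuw).
    by case/andP: h1 => -> _; case/andP: h2 => -> _; case/andP: h3 => -> _;
       case/andP: h4 => -> _.
  + apply: (f2 p q l m nxy nuw).
    by case/andP: h1 => -> _; case/andP: h2 => -> _; case/andP: h3 => -> _;
       case/andP: h4 => -> _.
Qed.


Lemma pow2_sidon_le a b c d : a <= b -> c <= d ->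
  2 ^ a + 2 ^ b = 2 ^ c + 2 ^ d -> a = c /\ b = d.
Proof.
move=> ab cd E.
have bd : b = d.
  case: (ltngtP b d) => // H.
  - have : 2 ^ a + 2 ^ b < 2 ^ c + 2 ^ d; last by rewrite E ltnn.
    have h1 : 2 ^ a <= 2 ^ b by rewrite leq_exp2l.
    have h2 : 2 ^ b.+1 <= 2 ^ d by rewrite leq_exp2l.
    have h3 : 0 < 2 ^ c by rewrite expn_gt0.
    rewrite expnS in h2; lia.
  - have : 2 ^ c + 2 ^ d < 2 ^ a + 2 ^ b; last by rewrite E ltnn.
    have h1 : 2 ^ c <= 2 ^ d by rewrite leq_exp2l.
    have h2 : 2 ^ d.+1 <= 2 ^ b by rewrite leq_exp2l.
    have h3 : 0 < 2 ^ a by rewrite expn_gt0.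
    rewrite expnS in h2; lia.
split => //; subst d; apply: (@expnI 2) => //; lia.
Qed.

Lemma pow2_sidon a b c d : 2 ^ a + 2 ^ b = 2 ^ c + 2 ^ d ->
  (a = c /\ b = d) \/ (a = d /\ b = c).
Proof.
case: (leqP a b) => ab; case: (leqP c d) => cd E.
- by left; apply: pow2_sidon_le.
- by right; case: (@pow2_sidon_le a b d c ab (ltnW cd)); rewrite // E addnC.
- by right; case: (@pow2_sidon_le b a c d (ltnW ab) cd) => //; rewrite -E addnC.
- left; case: (@pow2_sidon_le b a d c (ltnW ab) (ltnW cd)) => //.
  by rewrite addnC E addnC.
Qed.

Lemma divmod_inj g a a' t t' : t < g -> t' < g -> a * g + t = a' * g + t' ->
  a = a' /\ t = t'.
Proof.
move=> tg t'g E.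
have Et : t = t'.
  by move: (congr1 (modn^~ g) E); rewrite /= !modnMDl !modn_small.
split=> //; subst t'; move/addIn: E => /eqP; rewrite eqn_pmul2r; first by move/eqP.
lia.
Qed.

Section PB.
Variables (n kk rr g : nat).
Hypotheses (npos : 0 < n) (kpos : 0 < kk) (rpos : 0 < rr) (gpos : 0 < g).

Definition Mm := 2 ^ (kk * rr * g + 2).
Definition code (i j t : nat) := (i * rr + j) * g + t.
Definition cc (i j t : nat) := Mm * (i * j) + 2 ^ (code i j t).

Hypothesis nbig : 2 * (Mm * (kk * rr + 1)) <= n.

Lemma code_lt i j t : i < kk -> j < rr -> t < g -> code i j t < kk * rr * g.
Proof.
rewrite /code => hi hj ht.
have h1 : i * rr + j < kk * rr.
  have : i.+1 * rr <= kk * rr by rewrite leq_mul2r hi orbT.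
  rewrite mulSn; lia.
have h2 : (i * rr + j).+1 * g <= kk * rr * g by rewrite leq_mul2r h1 orbT.
rewrite mulSn in h2; lia.
Qed.

Lemma pow_code_lt i j t : i < kk -> j < rr -> t < g -> 2 * 2 ^ code i j t < Mm.
Proof.
move=> hi hj ht; rewrite /Mm -expnS ltn_exp2l //.
by have := code_lt hi hj ht; lia.
Qed.

Lemma cc_lt i j t : i < kk -> j < rr -> t < g -> 2 * cc i j t < n.
Proof.
move=> hi hj ht; apply: leq_trans nbig; rewrite /cc.
have := pow_code_lt hi hj ht.
have : i * j < kk * rr by nia.
nia.
Qed.

Lemma code_inj i j t i' j' t' : j < rr -> t < g -> j' < rr -> t' < g ->
  code i j t = code i' j' t' -> [/\ i = i', j = j' & t = t'].
Proof.
rewrite /code => hj ht hj' ht' /(divmod_inj ht ht') [/(divmod_inj hj hj') [-> ->] ->].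
by [].
Qed.

Lemma cc_inj i j t t' : j < rr -> t < g -> t' < g -> cc i j t = cc i j t' -> t = t'.
Proof.
rewrite /cc => hj ht ht' /addnI /(@expnI 2) E.
by case: (code_inj hj ht hj ht' (E isT)).
Qed.

Lemma cc_key i1 i2 j1 j2 t1 t2 t3 t4 :
  i1 < kk -> i2 < kk -> j1 < rr -> j2 < rr -> t1 < g -> t2 < g -> t3 < g -> t4 < g ->
  cc i1 j1 t1 + cc i2 j2 t4 = cc i1 j2 t2 + cc i2 j1 t3 ->
  (j1 = j2 /\ t1 = t2) \/ (i1 = i2 /\ t1 = t3).
Proof.
move=> hi1 hi2 hj1 hj2 ht1 ht2 ht3 ht4 E.
have E2 : 2 ^ code i1 j1 t1 + 2 ^ code i2 j2 t4 = 2 ^ code i1 j2 t2 + 2 ^ code i2 j1 t3.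
  move: (congr1 (modn^~ Mm) E); rewrite /cc /=.
  have -> : Mm * (i1 * j1) + 2 ^ code i1 j1 t1 + (Mm * (i2 * j2) + 2 ^ code i2 j2 t4)
     = (i1 * j1 + i2 * j2) * Mm + (2 ^ code i1 j1 t1 + 2 ^ code i2 j2 t4) by rewrite mulnDl; lia.
  have -> : Mm * (i1 * j2) + 2 ^ code i1 j2 t2 + (Mm * (i2 * j1) + 2 ^ code i2 j1 t3)
     = (i1 * j2 + i2 * j1) * Mm + (2 ^ code i1 j2 t2 + 2 ^ code i2 j1 t3) by rewrite mulnDl; lia.
  rewrite !modnMDl !modn_small //.
  + by have := pow_code_lt hi1 hj2 ht2; have := pow_code_lt hi2 hj1 ht3; lia.
  + by have := pow_code_lt hi1 hj1 ht1; have := pow_code_lt hi2 hj2 ht4; lia.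
case: (pow2_sidon E2) => [[E3 _]|[E3 _]].
  by case: (code_inj hj1 ht1 hj2 ht2 E3) => _ -> ->; left.
by case: (code_inj hj1 ht1 hj1 ht3 E3) => -> _ ->; right.
Qed.

Definition dn x c := (x + (n - c %% n)) %% n.
Lemma dn_lt x c : dn x c < n. Proof. exact: ltn_pmod. Qed.
Lemma dnK x c : (dn x c + c) %% n = x %% n.
Proof.
rewrite /dn modnDml {2}(divn_eq c n).
have h := ltn_pmod c npos.
have -> : x + (n - c %% n) + (c %/ n * n + c %% n) = (c %/ n).+1 * n + x.
  rewrite mulSn; lia.
by rewrite modnMDl.
Qed.

Definition om (a : nat) : 'I_n := Ordinal (ltn_pmod a npos).
Definition dnO x c : 'I_n := Ordinal (dn_lt x c).

Definition incB (p : ('I_n * 'I_kk)%type) (l : ('I_n * 'I_rr)%type) : bool :=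
  [exists t : 'I_g, ((l.1 : nat) + cc p.2 l.2 t) %% n == p.1].

Lemma modn_eq_small a b : a < n -> b < n -> a %% n = b %% n -> a = b.
Proof. by move=> ha hb; rewrite !modn_small. Qed.

Lemma cc_ltn i j t : i < kk -> j < rr -> t < g -> cc i j t < n.
Proof. by move=> hi hj ht; have := cc_lt hi hj ht; lia. Qed.

Lemma degP p : #|[set l | incB p l]| = rr * g.
Proof.
case: p => x i.
pose f (jt : ('I_rr * 'I_g)%type) : ('I_n * 'I_rr)%type := (dnO x (cc i jt.1 jt.2), jt.1).
have finj : injective f.
  move=> [j t] [j' t'] [/= E1 E2]; subst j'.
  have E3 : cc i j t = cc i j t'.
    apply: modn_eq_small; try apply: cc_ltn => //.
    apply/eqP; rewrite -(eqn_modDl (dn x (cc i j t))); apply/eqP.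
    by rewrite dnK E1 dnK.
  by congr (_, _); apply: val_inj; apply: (cc_inj (ltn_ord j) (ltn_ord t) (ltn_ord t') E3).
have -> : [set l | incB (x, i) l] = f @: setT.
  apply/setP => [[y j]]; rewrite inE; apply/existsP/imsetP.
    case=> t /eqP /= E; exists (j, t) => //; rewrite /f /=; congr (_, _).
    apply: val_inj => /=; apply: modn_eq_small => //; first exact: dn_lt.
    apply/eqP; rewrite -(eqn_modDr (cc i j t)) E dnK modn_small //.
  case=> [[j' t']] _ [-> ->]; exists t' => /=.
  by rewrite dnK modn_small.
by rewrite card_imset // cardsT card_prod !card_ord.
Qed.

Lemma degL l : #|[set p | incB p l]| = kk * g.
Proof.
case: l => y j.
pose f (it : ('I_kk * 'I_g)%type) : ('I_n * 'I_kk)%type := (om (y + cc it.1 j it.2), it.1).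
have finj : injective f.
  move=> [i t] [i' t'] [/= E1 E2]; subst i'.
  have E3 : cc i j t = cc i j t'.
    apply: modn_eq_small; try apply: cc_ltn => //.
    by apply/eqP; rewrite -(eqn_modDl y); apply/eqP.
  by congr (_, _); apply: val_inj; apply: (cc_inj (ltn_ord j) (ltn_ord t) (ltn_ord t') E3).
have -> : [set p | incB p (y, j)] = f @: setT.
  apply/setP => [[x i]]; rewrite inE; apply/existsP/imsetP.
    case=> t /eqP /= E; exists (i, t) => //; rewrite /f /=; congr (_, _).
    by apply: val_inj => /=.
  by case=> [[i' t']] _ [-> ->]; exists t'.
by rewrite card_imset // cardsT card_prod !card_ord.
Qed.

Lemma noC4B p1 p2 l1 l2 : p1 != p2 -> l1 != l2 ->
  ~ [/\ incB p1 l1, incB p1 l2, incB p2 l1 & incB p2 l2].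
Proof.
case: p1 p2 l1 l2 => [x1 i1] [x2 i2] [y1 j1] [y2 j2] np nl.
case=> /existsP[t1 /eqP /= E1] /existsP[t2 /eqP /= E2]
       /existsP[t3 /eqP /= E3] /existsP[t4 /eqP /= E4].
have Hm : (cc i1 j1 t1 + cc i2 j2 t4) %% n = (cc i1 j2 t2 + cc i2 j1 t3) %% n.
  apply/eqP; rewrite -(eqn_modDl (y1 + y2)); apply/eqP.
  have -> : y1 + y2 + (cc i1 j1 t1 + cc i2 j2 t4) =
            (y1 + cc i1 j1 t1) + (y2 + cc i2 j2 t4) by lia.
  have -> : y1 + y2 + (cc i1 j2 t2 + cc i2 j1 t3) =
            (y2 + cc i1 j2 t2) + (y1 + cc i2 j1 t3) by lia.
  by rewrite -modnDm -[in RHS]modnDm E1 E4 E2 E3 addnC.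
have L := fun (i : 'I_kk) (j : 'I_rr) (t : 'I_g) => cc_lt (ltn_ord i) (ltn_ord j) (ltn_ord t).
have Ee : cc i1 j1 t1 + cc i2 j2 t4 = cc i1 j2 t2 + cc i2 j1 t3.
  move: Hm; rewrite !modn_small //.
  + by have := L i1 j2 t2; have := L i2 j1 t3; lia.
  + by have := L i1 j1 t1; have := L i2 j2 t4; lia.
case: (cc_key (ltn_ord i1) (ltn_ord i2) (ltn_ord j1) (ltn_ord j2) (ltn_ord t1)
   (ltn_ord t2) (ltn_ord t3) (ltn_ord t4) Ee) => [[Ej Et]|[Ei Et]].
- have ej : j1 = j2 by apply: val_inj.
  have et : t1 = t2 by apply: val_inj.
  move: E2; rewrite -ej -et => E2.
  move/negP: nl; apply; apply/eqP; congr (_, _); last by [].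
  apply: val_inj; apply: modn_eq_small; rewrite ?ltn_ord //.
  by apply/eqP; rewrite -(eqn_modDr (cc i1 j1 t1)) E1 E2.
- have ei : i1 = i2 by apply: val_inj.
  have et : t1 = t3 by apply: val_inj.
  move: E3; rewrite -ei -et => E3.
  move/negP: np; apply; apply/eqP; congr (_, _); last by [].
  by apply: val_inj => /=; rewrite -E1 -E3.
Qed.

Definition sB := if 1 < g then 1 else Mm + 2 ^ rr - 1.
Hypothesis gcase : 1 < g \/ [/\ g = 1, 1 < kk & 1 < rr].

Definition i0 : 'I_kk := Ordinal kpos.
Definition j0 : 'I_rr := Ordinal rpos.
Definition t0 : 'I_g := Ordinal gpos.

Lemma modDl' a b c : a %% n = b -> (a + c) %% n = (b + c) %% n.
Proof. by move<-; rewrite modnDml. Qed.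

Let e := adj incB.

Lemma edge (p : ('I_n * 'I_kk)%type) (l : ('I_n * 'I_rr)%type) :
  incB p l -> connect e (inl p) (inr l) /\ connect e (inr l) (inl p).
Proof. by move=> h; split; apply: connect1. Qed.

Lemma stepB (x : 'I_n) : connect e (inl (x, i0)) (inl (om (x + sB), i0)).
Proof.
case: gcase => [g1|[g1 k1 r1]].
- pose t1 : 'I_g := Ordinal g1.
  pose l := (dnO x (cc 0 0 0), j0).
  have h1 : incB (x, i0) l.
    by apply/existsP; exists t0; rewrite /= dnK modn_small.
  have h2 : incB (om (x + sB), i0) l.
    apply/existsP; exists t1; rewrite /= /sB g1.
    have -> : cc 0 0 1 = cc 0 0 0 + 1 by rewrite /cc /code !(mul0n, muln0, add0n, addn0).
    by rewrite addnA; apply/eqP; rewrite (modDl' _ (dnK _ _)) modnDml.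
  apply: connect_trans (proj1 (edge h1)) (proj2 (edge h2)).
- pose i1 : 'I_kk := Ordinal k1.
  pose j1 : 'I_rr := Ordinal r1.
  pose y1 := dnO x (cc 0 1 0).
  pose x1 := om (y1 + cc 1 1 0).
  pose y2 := dnO x1 (cc 1 0 0).
  have h1 : incB (x, i0) (y1, j1).
    by apply/existsP; exists t0; rewrite /= dnK modn_small.
  have h2 : incB (x1, i1) (y1, j1).
    by apply/existsP; exists t0.
  have h3 : incB (x1, i1) (y2, j0).
    by apply/existsP; exists t0; rewrite /= dnK /= modn_mod.
  have h4 : incB (om (x + sB), i0) (y2, j0).
    apply/existsP; exists t0; rewrite /=.
    have gn : ~~ (1 < g) by rewrite g1.
    rewrite /sB (negbTE gn).
    have c000 : cc 0 0 0 = 1 by rewrite /cc /code g1 !(mul0n, muln0, add0n, addn0, muln1, mul1n).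
    have c010 : cc 0 1 0 = 2 by rewrite /cc /code g1 !(mul0n, muln0, add0n, addn0, muln1, mul1n).
    have c100 : cc 1 0 0 = 2 ^ rr by rewrite /cc /code g1 !(mul0n, muln0, add0n, addn0, muln1, mul1n).
    have c110 : cc 1 1 0 = Mm + 2 ^ rr.+1 by rewrite /cc /code g1 !(mul0n, muln0, add0n, addn0, muln1, mul1n) addn1.
    rewrite c000 /= -(eqn_modDr (2 ^ rr + 2)); apply/eqP.
    have hp : 0 < 2 ^ rr by rewrite expn_gt0.
    have -> : x + (Mm + 2 ^ rr - 1) + (2 ^ rr + 2) = x + (cc 1 1 0 + 1).
      by rewrite c110 expnS; lia.
    have -> : dn x1 (cc 1 0 0) + 1 + (2 ^ rr + 2) = (dn x1 (cc 1 0 0) + cc 1 0 0) + 3.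
      by rewrite c100; lia.
    rewrite (modDl' _ (dnK _ _)) modn_mod modnDml.
    have -> : dn x (cc 0 1 0) + cc 1 1 0 + 3 = (dn x (cc 0 1 0) + cc 0 1 0) + (cc 1 1 0 + 1).
      by rewrite c010; lia.
    by rewrite (modDl' _ (dnK _ _)) modnDml.
  apply: connect_trans (proj1 (edge h1)) _.
  apply: connect_trans (proj2 (edge h2)) _.
  apply: connect_trans (proj1 (edge h3)) (proj2 (edge h4)).
Qed.

Hypothesis cop : coprime n sB.

Lemma stepsB (x : 'I_n) m : connect e (inl (x, i0)) (inl (om (x + m * sB), i0)).
Proof.
elim: m => [|m IH].
  have -> : om (x + 0 * sB) = x by apply: val_inj; rewrite /= mul0n addn0 modn_small.
  exact: connect0.
apply: connect_trans IH _.
have -> : om (x + m.+1 * sB) = om (om (x + m * sB) + sB).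
  by apply: val_inj; rewrite /= modnDml mulSn; congr (_ %% _); lia.
exact: stepB.
Qed.

Lemma reach0 (x z : 'I_n) : connect e (inl (x, i0)) (inl (z, i0)).
Proof.
case: (Bezoutl sB npos) => a _ ha.
move/eqP: (cop) => g1; rewrite g1 in ha.
set K := x + (n - z).
have -> : z = om (x + (a * K) * sB).
  apply: val_inj => /=; rewrite -[LHS](modn_small (ltn_ord z)).
  apply/eqP; rewrite -(eqn_modDr K); apply/eqP.
  have E1 : x + a * K * sB + K = K * (1 + a * sB) + x.
    rewrite mulnDr muln1 mulnA (mulnC K a); lia.
  rewrite E1 -(divnK ha) mulnA modnMDl.
  have hz := ltn_ord z.
  have -> : z + K = 1 * n + x by rewrite /K; lia.
  by rewrite modnMDl.
exact: stepsB.
Qed.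

Lemma connB : forall u v, connect e u v.
Proof.
pose root : (('I_n * 'I_kk) + ('I_n * 'I_rr))%type := inl (om 0, i0).
have Rl : forall l, connect e root (inr l).
  move=> [y j].
  have h : incB (om (y + cc 0 j 0), i0) (y, j) by apply/existsP; exists t0.
  exact: connect_trans (reach0 _ _) (proj1 (edge h)).
have Rall : forall u, connect e root u.
  case=> [[x i]|l]; last exact: Rl.
  have h : incB (x, i) (dnO x (cc i 0 0), j0).
    by apply/existsP; exists t0; rewrite /= dnK modn_small.
  exact: connect_trans (Rl _) (proj2 (edge h)).
move=> u v; apply: connect_trans (Rall v).
by rewrite (sym_connect_sym (@adj_sym _ _ incB)).
Qed.

Lemma gconfB : gconf (rr * g) (kk * g) incB.
Proof.
split; first exact: connB.
split; first exact: degP.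
split; first exact: degL.
exact: noC4B.
Qed.

End PB.


Lemma kdiv_gt0 r k : 0 < r -> 0 < k -> 0 < k %/ gcdn r k.
Proof.
move=> hr hk; rewrite divn_gt0 ?gcdn_gt0 ?hr //.
by apply: dvdn_leq => //; apply: dvdn_gcdr.
Qed.

Lemma D_add r k m n : 2 <= r -> 2 <= k -> D r k m -> D r k n -> D r k (m + n).
Proof.
move=> hr hk.
case: (posnP m) => [->|mp]; first by rewrite add0n.
case: (posnP n) => [->|np]; first by rewrite addn0.
move=> [inc1 G1] [inc2 G2].
have kp : 0 < k %/ gcdn r k by apply: kdiv_gt0; lia.
have p0 : 'I_(m * (k %/ gcdn r k)) by exists 0; rewrite muln_gt0 mp kp.
have q0 : 'I_(n * (k %/ gcdn r k)) by exists 0; rewrite muln_gt0 np kp.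
case: (mergeG p0 q0 hr hk G1 G2) => inc G.
have := transfer G.
by rewrite /D !card_sum !card_ord !mulnDl.
Qed.

Lemma D0 r k : D r k 0.
Proof.
rewrite /D !mul0n; exists (fun _ _ => false); split; last split; last split.
- by case=> [[]|[]].
- by case.
- by case.
- by case.
Qed.

Lemma partB r k : 2 <= r -> 2 <= k ->
  exists s N, odd s /\ forall n, N <= n -> coprime n s -> D r k n.
Proof.
move=> hr hk.
set g := gcdn r k; set kk := k %/ g; set rr := r %/ g.
have gpos : 0 < g by rewrite gcdn_gt0; lia.
have kpos : 0 < kk by apply: kdiv_gt0; lia.
have rpos : 0 < rr by rewrite /rr /g gcdnC; apply: kdiv_gt0; lia.
have gcase : 1 < g \/ [/\ g = 1, 1 < kk & 1 < rr].
  case: (ltngtP 1 g) => H; [by left|lia|right].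
  by rewrite /kk /rr -H !divn1.
exists (sB kk rr g), (2 * (Mm kk rr g * (kk * rr + 1))).+1; split.
  rewrite /sB; case: ifP => // _.
  have e1 : Mm kk rr g = 2 * 2 ^ (kk * rr * g + 1) by rewrite /Mm addnS expnS.
  have e2 : 2 ^ rr = 2 * 2 ^ rr.-1 by rewrite -expnS prednK.
  have h1 : 0 < 2 ^ rr.-1 by rewrite expn_gt0.
  have -> : Mm kk rr g + 2 ^ rr - 1 =
     (2 * (2 ^ (kk * rr * g + 1) + 2 ^ rr.-1 - 1)).+1 by rewrite e1 e2; lia.
  by rewrite /= mul2n odd_double.
move=> n hn cop.
have npos : 0 < n by lia.
have G := gconfB npos kpos rpos gpos (ltnW hn) gcase cop.
have := transfer G.
rewrite !card_prod !card_ord /D -/g -/kk -/rr.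
by rewrite /rr /kk !divnK // ?dvdn_gcdl ?dvdn_gcdr.
Qed.

Lemma frob (S : nat -> Prop) a : S 0 -> (forall m n, S m -> S n -> S (m + n)) ->
  S a -> S a.+1 -> forall m, a * a <= m -> S m.
Proof.
move=> S0 Sadd Sa Sa1.
have mult : forall q b, S b -> S (q * b).
  move=> q b Sb; elim: q => [|q IH]; first by rewrite mul0n.
  by rewrite mulSn; apply: Sadd.
case: (posnP a) => [a0|apos] m hm.
  by rewrite -(muln1 m); apply: mult; rewrite -a0.
set q := m %/ a; set rm := m %% a.
have hrm : rm < a by apply: ltn_pmod.
have hq : a <= q by have := leq_div2r a hm; rewrite mulnK.
have -> : m = (q - rm) * a + rm * a.+1.
  rewrite {1}(divn_eq m a) -/q -/rm mulnBl mulnS.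
  have : rm * a <= q * a by rewrite leq_mul2r; apply/orP; right; lia.
  lia.
by apply: Sadd; apply: mult.
Qed.

Unset Implicit Arguments.

Theorem theorem2 (r k : nat) : 2 <= r -> 2 <= k -> numerical_semigroup (D r k).
Proof.
move=> hr hk.
split; first exact: D0.
split; first by move=> m n; apply: D_add.
case: (partB hr hk) => s [N [os HD]].
have spos : 0 < s by move: os; case: (s).
set n0 := (2 * N) * s + 1.
have c1 : coprime n0 s.
  by rewrite /coprime gcdnC /n0 gcdnMDl gcdn1.
have c2 : coprime n0.+1 s.
  have -> : n0.+1 = 2 * (N * s + 1) by rewrite /n0; lia.
  rewrite coprimeMl coprime2n os /= /coprime gcdnC gcdnMDl gcdn1 //.
have h0 : N <= n0 by rewrite /n0; nia.
exists (n0 * n0) => m hm.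
apply: (frob (D0 r k) _ (HD _ h0 c1) (HD _ (leqW h0) c2)) => //.
by move=> a b; apply: D_add.
Qed.
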